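(* Let $\mathcal H$ be a finite-dimensional Hilbert space, $W_1,\dots,W_l$ subspaces of $\mathcal H$, $\ket h\in\mathcal H$ a unit vector, and $\epsilon_j:=\|\Pi_{W_j}\ket h\|_2^2$. Let $A=(\alpha_{ij})_{i,j\in[l]}$ be a tilting matrix with $\alpha_{jj}>0$ for all $j$, and let $\mathbf W_A\le\tilde{\mathcal H}$ be the $A$-tilted span of $W_1,\dots,W_l$. Then $$\max_{j\in[l]}\epsilon_j\Big(1-\sum_{i=1}^j\alpha_{ij}\Big)\ \le\ \|\Pi_{\mathbf W_A}\ket h\|_2^2\ \le\ \Big(\sum_{j=1}^l\sqrt{\epsilon_j}\sum_{k=j}^l 2^{k-j}\alpha_{kk}^{-1/2}\Big)^2.$$ In particular, if $\alpha_{jj}\ge\alpha>0$ for all $j\in[l]$, then $\|\Pi_{\mathbf W_A}\ket h\|_2^2\le\frac{2^{2l+1}}{\alpha}\sum_{j=1}^l\epsilon_j$.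
   Context: Let $\mathcal{H}_1,\ldots,\mathcal{H}_l$ be Hilbert spaces each of dimension $\dim\mathcal{H}$, $\tilde{\mathcal{H}}:=\mathcal{H}\oplus\mathcal{H}_1\oplus\cdots\oplus\mathcal{H}_l$ (orthogonal direct sum), and $\mathcal{T}_i$ a linear map taking $\mathcal H$ isometrically onto $\mathcal H_i$. A tilting matrix is an $l\times l$ matrix $A=(\alpha_{ij})$ with $0\le\alpha_{ij}\le1$ that is upper triangular ($\alpha_{ij}=0$ for $i>j$), diagonal dominated ($\alpha_{ii}\ge\alpha_{ij}$ for all $i\le j$) and substochastic ($\sum_{i=1}^j\alpha_{ij}\le1$ for all $j$). For $j\in[l]$ define the isometric embedding $\mathcal T_{j,A}:=\sqrt{1-\sum_{i=1}^j\alpha_{ij}}\,\mathbb 1_{\mathcal H}+\sum_{i=1}^j\sqrt{\alpha_{ij}}\,\mathcal T_i:\mathcal H\to\tilde{\mathcal H}$, with $\mathbb 1_{\mathcal H}$ the identity embedding. The $A$-tilted span is $\mathbf W_A:=\sum_{j=1}^l\mathcal T_{j,A}(W_j)\le\tilde{\mathcal H}$. $\ket h$ is viewed in $\tilde{\mathcal H}$ via the identity embedding; $\Pi_X$ is orthogonal projection onto $X$. *)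

(* Defs.v *)
(* Finite-dimensional complex Hilbert spaces are modelled as
   row vectors 'rV[C]_n over a numClosedFieldType C (e.g. algC), with the
   standard inner product <u,v> = u *m v^* . Subspaces are row spaces of
   matrices (mxalgebra). *)
From HB Require Import structures.
From mathcomp Require Import all_boot all_order all_algebra.
Set Implicit Arguments. Unset Strict Implicit. Unset Printing Implicit Defensive.
Import Order.TTheory GRing.Theory Num.Theory.
Local Open Scope ring_scope.

Definition adjmx (C : numClosedFieldType) (m n : nat) (A : 'M[C]_(m, n)) : 'M[C]_(n, m) :=
  (map_mx Num.conj A)^T.

Definition sqnorm (C : numClosedFieldType) (n : nat) (v : 'rV[C]_n) : C :=
  (v *m adjmx v) 0 0.

(* orthogonal projection (acting on row vectors from the right) onto the
   row space of X :  P = adj(B) (B adj(B))^{-1} B  with B a basis (row_base) of X *)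
Definition orthproj (C : numClosedFieldType) (m N : nat) (X : 'M[C]_(m, N)) : 'M[C]_N :=
  adjmx (row_base X) *m invmx (row_base X *m adjmx (row_base X)) *m row_base X.

(* A tilting matrix (0-based indices, i, j : 'I_l) *)
Definition tilting (C : numClosedFieldType) (l : nat) (A : 'M[C]_l) : Prop :=
  [/\ (forall i j, 0 <= A i j <= 1),
      (forall i j : 'I_l, (j < i)%N -> A i j = 0),
      (forall i j : 'I_l, (i <= j)%N -> A i j <= A i i) &
      (forall j : 'I_l, \sum_(i < l | (i <= j)%N) A i j <= 1)].

(* The isometric embedding T_{j,A} : H -> tilde H, given the identity
   embedding E ord0 and the isometries T_i = E (lift ord0 i) onto H_i. *)
Definition tiltemb (C : numClosedFieldType) (n l N : nat)
  (E : 'I_l.+1 -> 'M[C]_(n, N)) (A : 'M[C]_l) (j : 'I_l) : 'M[C]_(n, N) :=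
  sqrtC (1 - \sum_(i < l | (i <= j)%N) A i j) *: E ord0
  + \sum_(i < l | (i <= j)%N) sqrtC (A i j) *: E (lift ord0 i).

Definition tilted_span (C : numClosedFieldType) (n l N : nat)
  (E : 'I_l.+1 -> 'M[C]_(n, N)) (A : 'M[C]_l) (W : 'I_l -> 'M[C]_n) : 'M[C]_N :=
  (\sum_(j < l) <<W j *m tiltemb E A j>>)%MS.

(* Main.v *)
Require Import Defs.
From HB Require Import structures.
From mathcomp Require Import all_boot all_order all_algebra.
From mathcomp Require Import zify.
Import Order.TTheory GRing.Theory Num.Theory.
Local Open Scope ring_scope.
Set Implicit Arguments. Unset Strict Implicit. Unset Printing Implicit Defensive.

Section Basics.
Variable C : numClosedFieldType.
Local Notation "''[' u , v ]" := (@dotmx C _ u v) : ring_scope.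
Local Notation "''[' u ]" := (@dotmx C _ u u) : ring_scope.

Lemma adjmxM m n p (A : 'M[C]_(m,n)) (B : 'M_(n,p)) :
  adjmx (A *m B) = adjmx B *m adjmx A.
Proof. by rewrite /adjmx map_mxM trmx_mul. Qed.

Lemma adjmxK m n (A : 'M[C]_(m,n)) : adjmx (adjmx A) = A.
Proof. by apply/matrixP=> i j; rewrite !mxE conjCK. Qed.

Lemma adjmxD m n (A B : 'M[C]_(m,n)) : adjmx (A + B) = adjmx A + adjmx B.
Proof. by apply/matrixP=> i j; rewrite !mxE rmorphD. Qed.

Lemma adjmxZ m n a (A : 'M[C]_(m,n)) : adjmx (a *: A) = a^* *: adjmx A.
Proof. by apply/matrixP=> i j; rewrite !mxE rmorphM. Qed.

Lemma adjmx_sum m n (I : finType) (P : pred I) (F : I -> 'M[C]_(m,n)) :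
  adjmx (\sum_(i | P i) F i) = \sum_(i | P i) adjmx (F i).
Proof.
apply/matrixP=> i j; rewrite !mxE summxE rmorph_sum.
by rewrite summxE; apply: eq_bigr => k _; rewrite !mxE.
Qed.

Lemma adjmx_scalar n a : adjmx (a%:M : 'M[C]_n) = (a^*)%:M.
Proof.
by apply/matrixP=> i j; rewrite !mxE rmorphMn eq_sym.
Qed.

Lemma adjmx_inv n (A : 'M[C]_n) : adjmx (invmx A) = invmx (adjmx A).
Proof. by rewrite /adjmx map_invmx trmx_inv. Qed.

Lemma dotE n (u v : 'rV[C]_n) : '[u, v] = (u *m adjmx v) 0 0.
Proof. by rewrite dotmxE /adjmx map_trmx. Qed.

Lemma sqnormE n (v : 'rV[C]_n) : sqnorm v = '[v].
Proof. by rewrite dotE. Qed.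

Lemma dotMl n k (u : 'rV[C]_n) (v : 'rV[C]_k) (M : 'M_(n, k)) :
  '[u *m M, v] = '[u, v *m adjmx M].
Proof. by rewrite !dotE adjmxM adjmxK mulmxA. Qed.

Lemma dotZr n a (u v : 'rV[C]_n) : '[u, a *: v] = a^* * '[u, v].
Proof. by rewrite !dotE adjmxZ -scalemxAr mxE. Qed.

Lemma dot_sumr n (I : finType) (P : pred I) (u : 'rV[C]_n) (F : I -> 'rV[C]_n) :
  '[u, \sum_(i | P i) F i] = \sum_(i | P i) '[u, F i].
Proof.
rewrite dotE adjmx_sum mulmx_sumr summxE; apply: eq_bigr => i _.
by rewrite dotE.
Qed.

End Basics.

Section Proj.
Variable C : numClosedFieldType.
Local Notation "''[' u , v ]" := (@dotmx C _ u v) : ring_scope.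
Local Notation "''[' u ]" := (@dotmx C _ u u) : ring_scope.

Lemma dot0P n (u : 'rV[C]_n) : '[u] = 0 -> u = 0.
Proof. by move/eqP; rewrite dnorm_eq0 => /eqP. Qed.

Lemma gram_unit m N (B : 'M[C]_(m, N)) : row_free B -> B *m adjmx B \in unitmx.
Proof.
move=> fB; rewrite -row_free_unit -kermx_eq0.
set K := kermx _.
have KB : K *m B = 0.
  apply/row_matrixP=> i; rewrite row_mul row0; apply: dot0P.
  rewrite dotE adjmxM mulmxA -(mulmxA (row i K) B) -row_mul.
  by rewrite mulmx_ker row0 mul0mx mxE.
by apply/eqP/(row_free_inj fB); rewrite KB mul0mx.
Qed.

Lemma orthproj_adj m N (X : 'M[C]_(m, N)) : adjmx (orthproj X) = orthproj X.
Proof.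
rewrite /orthproj; move: (row_base X) => B.
by rewrite !adjmxM !adjmxK adjmx_inv adjmxM adjmxK mulmxA.
Qed.

Lemma orthproj_base m N (X : 'M[C]_(m, N)) : row_base X *m orthproj X = row_base X.
Proof.
rewrite /orthproj !mulmxA mulmxV ?mul1mx //.
by apply: gram_unit; apply: row_base_free.
Qed.

Lemma orthproj_id m N (X : 'M[C]_(m, N)) k (w : 'M_(k, N)) :
  (w <= X)%MS -> w *m orthproj X = w.
Proof.
rewrite -(eq_row_base X) => /submxP[D ->].
by rewrite -mulmxA orthproj_base.
Qed.

Lemma orthproj_sub m N (X : 'M[C]_(m, N)) k (v : 'M_(k, N)) :
  (v *m orthproj X <= X)%MS.
Proof.
by rewrite /orthproj mulmxA -(eq_row_base X) submxMl.
Qed.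

Lemma orthproj_idem m N (X : 'M[C]_(m, N)) : orthproj X *m orthproj X = orthproj X.
Proof. by apply: orthproj_id; have := orthproj_sub X (1%:M : 'M_N); rewrite mul1mx. Qed.

Lemma proj_norm m N (X : 'M[C]_(m, N)) (v : 'rV_N) :
  '[v *m orthproj X] = '[v, v *m orthproj X].
Proof. by rewrite dotMl orthproj_adj -mulmxA orthproj_idem. Qed.

Lemma proj_dot m N (X : 'M[C]_(m, N)) (v w : 'rV_N) :
  (w <= X)%MS -> '[v, w] = '[v *m orthproj X, w].
Proof. by move=> wX; rewrite dotMl orthproj_adj orthproj_id. Qed.

End Proj.

Definition tcoef (C : numClosedFieldType) l (A : 'M[C]_l) (j : 'I_l) (a : 'I_l.+1) : C :=
  if unlift ord0 a is Some i then (if (i <= j)%N then sqrtC (A i j) else 0)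
  else sqrtC (1 - \sum_(i < l | (i <= j)%N) A i j).

Section Emb.
Variable C : numClosedFieldType.
Variables (n l N : nat) (E : 'I_l.+1 -> 'M[C]_(n, N)).
Hypothesis hE : forall a b, E a *m adjmx (E b) = (a == b)%:R%:M.

Lemma tiltembE (A : 'M[C]_l) j : tiltemb E A j = \sum_a tcoef A j a *: E a.
Proof.
rewrite /tiltemb big_ord_recl /tcoef unlift_none; congr (_ + _).
rewrite big_mkcond; apply: eq_bigr => i _; rewrite liftK.
by case: ifP => _; rewrite ?scale0r.
Qed.

Lemma combE (f : 'I_l.+1 -> C) b :
  (\sum_a f a *: E a) *m adjmx (E b) = (f b)%:M.
Proof.
rewrite mulmx_suml (bigD1 b) //= -scalemxAl hE eqxx scalemx1 big1 ?addr0 //.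
by move=> a ab; rewrite -scalemxAl hE (negbTE ab) raddf0 scaler0.
Qed.

Lemma combE2 (f g : 'I_l.+1 -> C) :
  (\sum_a f a *: E a) *m adjmx (\sum_b g b *: E b) = (\sum_a f a * (g a)^*)%:M.
Proof.
rewrite adjmx_sum mulmx_sumr raddf_sum; apply: eq_bigr => a _.
by rewrite adjmxZ -scalemxAr combE scale_scalar_mx mulrC.
Qed.

End Emb.

Section Tilt.
Variable C : numClosedFieldType.
Variables (l : nat) (A : 'M[C]_l).
Hypothesis hA : tilting A.

Lemma tilt_ge0 (i j : 'I_l) : 0 <= A i j.
Proof. by case: hA => h _ _ _; case/andP: (h i j). Qed.

Lemma tilt_s_le1 (j : 'I_l) : \sum_(i < l | (i <= j)%N) A i j <= 1.
Proof. by case: hA. Qed.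

Lemma tilt_c_ge0 (j : 'I_l) : 0 <= 1 - \sum_(i < l | (i <= j)%N) A i j.
Proof. by rewrite subr_ge0 tilt_s_le1. Qed.

Lemma tilt_dom (i j : 'I_l) : (i <= j)%N -> A i j <= A i i.
Proof. by case: hA => _ _ h _; apply: h. Qed.

Lemma tcoef0 (j : 'I_l) : tcoef A j ord0 = sqrtC (1 - \sum_(i < l | (i <= j)%N) A i j).
Proof. by rewrite /tcoef unlift_none. Qed.

Lemma tcoefS (j i : 'I_l) : tcoef A j (lift ord0 i) = if (i <= j)%N then sqrtC (A i j) else 0.
Proof. by rewrite /tcoef liftK. Qed.

Lemma sqrtC_nn_sq (x : C) : 0 <= x -> sqrtC x * (sqrtC x)^* = x.
Proof.
move=> x0; rewrite -normCK ger0_norm ?sqrtC_ge0 //.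
by rewrite sqrtCK.
Qed.

Lemma tcoef_norm (j : 'I_l) : \sum_a tcoef A j a * (tcoef A j a)^* = 1.
Proof.
rewrite big_ord_recl tcoef0 sqrtC_nn_sq ?tilt_c_ge0 //.
rewrite [X in _ + X = _](_ : _ = \sum_(i < l | (i <= j)%N) A i j) ?subrK //.
rewrite [RHS]big_mkcond; apply: eq_bigr => i _; rewrite tcoefS.
by case: ifP => _; rewrite ?mul0r // sqrtC_nn_sq ?tilt_ge0.
Qed.

Lemma tcoef0_ge0 (j : 'I_l) : 0 <= tcoef A j ord0.
Proof. by rewrite tcoef0 sqrtC_ge0 tilt_c_ge0. Qed.

Lemma tcoef0_le1 (j : 'I_l) : tcoef A j ord0 <= 1.
Proof.
rewrite tcoef0 -[X in _ <= X]sqrtC1 ler_sqrtC ?tilt_c_ge0 ?ler01 //.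
- by rewrite lerBlDr lerDl sumr_ge0 // => i _; exact: tilt_ge0.
- by rewrite nnegrE tilt_c_ge0.
- by rewrite nnegrE ler01.
Qed.

Lemma tcoef0_conj (j : 'I_l) : (tcoef A j ord0)^* = tcoef A j ord0.
Proof. by rewrite conj_Creal // ger0_real // tcoef0_ge0. Qed.

End Tilt.

Section Norms.
Variable C : numClosedFieldType.
Local Notation "''[' u , v ]" := (@dotmx C _ u v) : ring_scope.
Local Notation "''[' u ]" := (@dotmx C _ u u) : ring_scope.

Definition nrm n (u : 'rV[C]_n) := sqrtC '[u].

Lemma dot_ge0 n (u : 'rV[C]_n) : 0 <= '[u].
Proof. exact: dnorm_ge0. Qed.

Lemma nrm_ge0 n (u : 'rV[C]_n) : 0 <= nrm u.
Proof. by rewrite sqrtC_ge0 dot_ge0. Qed.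

Lemma nrm_sq n (u : 'rV[C]_n) : nrm u ^+ 2 = '[u].
Proof. exact: sqrtCK. Qed.

Lemma nrmD n (u v : 'rV[C]_n) : nrm (u + v) <= nrm u + nrm v.
Proof. exact: (triangle_lerif (@dotmx C n) u v).1. Qed.

Lemma nrmZ n a (u : 'rV[C]_n) : nrm (a *: u) = `|a| * nrm u.
Proof.
rewrite /nrm dnormZ sqrtCM ?nnegrE ?dot_ge0 ?exprn_ge0 ?normr_ge0 //.
by rewrite sqrCK.
Qed.

Lemma nrmN n (u : 'rV[C]_n) : nrm (- u) = nrm u.
Proof. by rewrite -scaleN1r nrmZ normrN1 mul1r. Qed.

Lemma nrmB n (u v : 'rV[C]_n) : nrm (u - v) <= nrm u + nrm v.
Proof. by rewrite -(nrmN v) nrmD. Qed.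

Lemma nrm_sum n (I : finType) (P : pred I) (F : I -> 'rV[C]_n) :
  nrm (\sum_(i | P i) F i) <= \sum_(i | P i) nrm (F i).
Proof.
apply: (big_ind2 (fun x y => nrm x <= y)).
- by rewrite /nrm linear0l sqrtC0.
- by move=> x1 x2 y1 y2 h1 h2; apply: le_trans (nrmD _ _) (lerD h1 h2).
- by [].
Qed.

Lemma CS n (u v : 'rV[C]_n) : `|'[u, v]| <= nrm u * nrm v.
Proof. exact: (CauchySchwarz_sqrt (@dotmx C n) u v).1. Qed.

Lemma herm_proj_le n (Q : 'M[C]_n) (u : 'rV[C]_n) :
  adjmx Q = Q -> Q *m Q = Q -> '[u *m Q] <= '[u].
Proof.
move=> hQ hQQ.
have -> : '[u] = '[u *m Q + (u - u *m Q)] by rewrite addrC subrK.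
have o : '[u *m Q, u - u *m Q] = 0.
  by rewrite dotMl hQ mulmxBl -mulmxA hQQ subrr linear0r.
by rewrite (hnormDd o) lerDl dot_ge0.
Qed.

Lemma comp_le n N (F : 'M[C]_(n, N)) (u : 'rV[C]_N) :
  F *m adjmx F = 1%:M -> '[u *m adjmx F] <= '[u].
Proof.
move=> hF; set Q := adjmx F *m F.
have hQ : adjmx Q = Q by rewrite /Q adjmxM adjmxK.
have hQQ : Q *m Q = Q by rewrite /Q mulmxA -(mulmxA _ F) hF mulmx1.
have -> : '[u *m adjmx F] = '[u *m Q].
  rewrite dotMl adjmxK [RHS]dotMl hQ. by rewrite -(mulmxA u Q Q) hQQ /Q mulmxA.
exact: herm_proj_le.
Qed.

End Norms.

Section Recur.
Variable C : numClosedFieldType.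
Variables (l : nat) (a Nn : 'I_l -> C) (R : C).
Hypothesis ha : forall i, 0 < a i.
Hypothesis hN : forall i, 0 <= Nn i.
Hypothesis hR : 0 <= R.
Hypothesis hrec : forall i : 'I_l, Nn i <= R / a i + \sum_(k < l | (i < k)%N) Nn k.

Lemma split_sum (F : 'I_l -> C) (i : 'I_l) :
  \sum_(k < l | (i <= k)%N) F k = F i + \sum_(k < l | (i < k)%N) F k.
Proof.
rewrite (bigD1 i) //=; congr (_ + _); apply: eq_bigl => k.
by rewrite ltn_neqAle andbC eq_sym.
Qed.

Lemma empty_sum (F : 'I_l -> C) (i : nat) : (l <= i)%N ->
  \sum_(k < l | (i <= k)%N) F k = 0.
Proof.
move=> li; rewrite big_pred0 // => k.
by apply/negbTE; rewrite -ltnNge (leq_trans (ltn_ord k) li).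
Qed.

Lemma B_rec (i : 'I_l) :
  \sum_(k < l | (i <= k)%N) 2%:R ^+ (k - i) / a k =
  (a i)^-1 + 2%:R * \sum_(k < l | (i.+1 <= k)%N) 2%:R ^+ (k - i.+1) / a k.
Proof.
rewrite split_sum subnn expr0 mul1r; congr (_ + _).
rewrite mulr_sumr; apply: eq_bigr => k ik.
by rewrite mulrA -exprS subnSK.
Qed.

Lemma T_bound d : forall i : nat, (l - i <= d)%N ->
  \sum_(k < l | (i <= k)%N) Nn k <=
  R * \sum_(k < l | (i <= k)%N) 2%:R ^+ (k - i) / a k.
Proof.
elim: d => [|d IH] i hi.
  by rewrite !empty_sum ?mulr0 // -subn_eq0 -leqn0.
case: (leqP l i) => [li|il]; first by rewrite !empty_sum ?mulr0.
pose io := Ordinal il.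
have -> : i = io by [].
rewrite split_sum B_rec.
have hi' : (l - i.+1 <= d)%N.
  by move: hi; rewrite subnS; case: (l - i)%N.
have hT := IH i.+1 hi'.
apply: le_trans (lerD (hrec io) (lexx _)) _.
rewrite -addrA mulrDr; apply: lerD; first by rewrite mulrC.
by rewrite mulrCA mulr_natl mulr2n lerD.
Qed.

Lemma N_bound (i : 'I_l) :
  Nn i <= R * \sum_(k < l | (i <= k)%N) 2%:R ^+ (k - i) / a k.
Proof.
apply: le_trans (T_bound (leqnn _)).
rewrite split_sum lerDl sumr_ge0 //.
Qed.

End Recur.

Lemma geo1 l j : ((\sum_(k < l | (j <= k)%N) 2 ^ (k - j)).+1 <= 2 ^ (l - j))%N.
Proof.
elim: l => [|l IH]; first by rewrite big_ord0 sub0n.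
rewrite big_mkcond big_ord_recr /= -big_mkcond /=.
case: (leqP j l) => h.
  by rewrite subSn // expnS mul2n -addnn ltn_add2r.
have e1 : (l.+1 - j = 0)%N by lia.
have e2 : (l - j = 0)%N by lia.
by move: IH; rewrite e1 e2 addn0.
Qed.

Lemma geo2 l : (\sum_(j < l) (2 ^ (l - j)) ^ 2 <= 2 ^ (2 * l + 1))%N.
Proof.
elim: l => [|l IH]; first by rewrite big_ord0.
rewrite big_ord_recl /= subn0.
have -> : (\sum_(i < l) (2 ^ (l.+1 - bump 0 i)) ^ 2 = \sum_(i < l) (2 ^ (l - i)) ^ 2)%N.
  by apply: eq_bigr => i _; rewrite /bump /= add1n subSS.
have e1 : ((2 ^ l.+1) ^ 2 = 4 * 2 ^ (2 * l))%N.
  by rewrite -expnM -[4%N]/(2 ^ 2)%N -expnD; congr (_ ^ _)%N; lia.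
have e2 : (2 ^ (2 * l + 1) = 2 * 2 ^ (2 * l))%N by rewrite expnD mulnC.
have e3 : (2 ^ (2 * l.+1 + 1) = 8 * 2 ^ (2 * l))%N.
  by rewrite -[8%N]/(2 ^ 3)%N -expnD; congr (_ ^ _)%N; lia.
rewrite e1 e3; rewrite e2 in IH; lia.
Qed.

Section SumCS.
Variable C : numClosedFieldType.
Local Notation "''[' u , v ]" := (@dotmx C _ u v) : ring_scope.

Lemma dot_row l (x y : 'I_l -> C) :
  '[\row_j x j, \row_j y j] = \sum_j x j * (y j)^*.
Proof. by rewrite dotE !mxE; apply: eq_bigr => j _; rewrite !mxE. Qed.

Lemma sumCS l (x y : 'I_l -> C) : (forall j, 0 <= x j) -> (forall j, 0 <= y j) ->
  (\sum_j x j * y j) ^+ 2 <= (\sum_j x j ^+ 2) * (\sum_j y j ^+ 2).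
Proof.
move=> hx hy.
have real_conj z : 0 <= z -> z^* = z by move=> z0; rewrite conj_Creal // ger0_real.
have := (CauchySchwarz (@dotmx C l) (\row_j x j) (\row_j y j)).1.
rewrite /= !dot_row.
have -> : \sum_j x j * (y j)^* = \sum_j x j * y j.
  by apply: eq_bigr => j _; rewrite real_conj.
have -> : \sum_j x j * (x j)^* = \sum_j x j ^+ 2.
  by apply: eq_bigr => j _; rewrite real_conj // expr2.
have -> : \sum_j y j * (y j)^* = \sum_j y j ^+ 2.
  by apply: eq_bigr => j _; rewrite real_conj // expr2.
rewrite ger0_norm // sumr_ge0 // => j _; exact: mulr_ge0.
Qed.

End SumCS.

Unset Implicit Arguments.

Local Notation "''[' u , v ]" := (dotmx u v) : ring_scope.
Local Notation "''[' u ]" := (dotmx u u) : ring_scope.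

Theorem proposition3 (C : numClosedFieldType) (n l : nat)
  (E : 'I_l.+1 -> 'M[C]_(n, n * l.+1))
  (hE : forall a b, E a *m adjmx (E b) = (a == b)%:R%:M)
  (W : 'I_l -> 'M[C]_n) (h : 'rV[C]_n) (hh : sqnorm h = 1)
  (A : 'M[C]_l) (hA : tilting A) (hdiag : forall j, 0 < A j j) :
  let eps j := sqnorm (h *m orthproj (W j)) in
  let p := sqnorm ((h *m E ord0) *m orthproj (tilted_span E A W)) in
  [/\ (forall j : 'I_l, eps j * (1 - \sum_(i < l | (i <= j)%N) A i j) <= p),
      p <= (\sum_(j < l) sqrtC (eps j) *
              \sum_(k < l | (j <= k)%N) 2%:R ^+ (k - j)%N / sqrtC (A k k)) ^+ 2 &
      (forall alpha : C, 0 < alpha -> (forall j, alpha <= A j j) ->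
         p <= 2%:R ^+ (2 * l + 1)%N / alpha * \sum_(j < l) eps j)].
Proof.
move=> eps p.
set v := h *m E ord0.
set X := tilted_span E A W.
set z := v *m orthproj X.
set T := tiltemb E A.
have pE : p = '[z] by rewrite /p sqnormE.
have epsE j : eps j = '[h *m orthproj (W j)] by rewrite /eps sqnormE.
have hp0 : 0 <= p by rewrite pE dot_ge0.
have heps0 j : 0 <= eps j by rewrite epsE dot_ge0.
have TE0 j (y : 'rV_n) : '[v, y *m T j] = tcoef A j ord0 * '[h, y].
  rewrite /v dotMl -mulmxA /T tiltembE combE // mul_mx_scalar dotZr.
  by rewrite tcoef0_conj.
have TT j : T j *m adjmx (T j) = 1%:M.
  by rewrite /T tiltembE combE2 // tcoef_norm.
have bullet1 : forall j : 'I_l, eps j * (1 - \sum_(i < l | (i <= j)%N) A i j) <= p.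
  move=> j; set y := h *m orthproj (W j); set w := y *m T j.
  have wX : (w <= X)%MS.
    rewrite /X /tilted_span; apply: (sumsmx_sup j) => //.
    by rewrite genmxE submxMr // orthproj_sub.
  have e1 : '[v, w] = tcoef A j ord0 * eps j.
    by rewrite TE0 epsE proj_norm.
  have e3 : '[w] = eps j.
    by rewrite epsE /w dotMl -mulmxA TT mulmx1.
  have := CS z w; rewrite -(proj_dot _ wX) e1 /nrm e3 -pE.
  set c := tcoef A j ord0.
  have c0 : 0 <= c by apply: tcoef0_ge0.
  have c2 : c ^+ 2 = 1 - \sum_(i < l | (i <= j)%N) A i j by rewrite /c tcoef0 sqrtCK.
  rewrite ger0_norm ?mulr_ge0 // => hc.
  have hc2 : (c * eps j) ^+ 2 <= p * eps j.
    have := hc; rewrite -(@ler_pXn2r _ 2) ?nnegrE ?mulr_ge0 ?sqrtC_ge0 //.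
    by rewrite !exprMn !sqrtCK.
  have [e0|epos] := eqVneq (eps j) 0; first by rewrite e0 mul0r.
  have egt0 : 0 < eps j by rewrite lt_def epos heps0.
  rewrite -c2 -(ler_pM2r egt0).
  by move: hc2; rewrite exprMn expr2 mulrA mulrC mulrA.
have zX : (z <= X)%MS by apply: orthproj_sub.
move: zX; rewrite {1}/X /tilted_span => /sub_sumsmxP[u_ zE].
set w := fun j => (u_ j *m <<W j *m T j>>%MS *m pinvmx (W j *m T j)) *m W j.
have zE' : z = \sum_j w j *m T j.
  rewrite zE; apply: eq_bigr => j _; rewrite /w -mulmxA mulmxKpV //.
  by apply: submx_trans (submxMl _ _) _; rewrite genmxE.
have wW j : (w j <= W j)%MS by rewrite submxMl.
have pz : p = '[v, z] by rewrite pE /z proj_norm.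
have hp : p = \sum_j tcoef A j ord0 * '[h *m orthproj (W j), w j].
  rewrite pz zE' dot_sumr; apply: eq_bigr => j _.
  by rewrite TE0 -proj_dot.
set R := nrm z.
have R0 : 0 <= R by apply: nrm_ge0.
have pR : p = R ^+ 2 by rewrite pE nrm_sq.
have hp1 : p <= \sum_j sqrtC (eps j) * nrm (w j).
  rewrite -[p]ger0_norm // {1}hp; apply: le_trans (ler_norm_sum _ _ _) _.
  apply: ler_sum => j _; rewrite normrM epsE.
  rewrite -[X in _ <= X]mul1r; apply: ler_pM => //.
  - by rewrite ger0_norm ?tcoef0_le1 ?tcoef0_ge0.
  - exact: CS.
have hrec : forall i : 'I_l, nrm (w i) <= R / sqrtC (A i i) +
    \sum_(k < l | (i < k)%N) nrm (w k).
  move=> i.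
  set ai := sqrtC (A i i).
  have ai0 : 0 < ai by rewrite sqrtC_gt0 hdiag.
  set zi := z *m adjmx (E (lift ord0 i)).
  have hzi : nrm zi <= R.
    rewrite /nrm ler_sqrtC ?nnegrE ?dot_ge0 //.
    by apply: comp_le; rewrite hE eqxx.
  have ziE : zi = ai *: w i + \sum_(k < l | (i < k)%N) sqrtC (A i k) *: w k.
    rewrite /zi zE' mulmx_suml.
    transitivity (\sum_(k < l | (i <= k)%N) sqrtC (A i k) *: w k).
      rewrite [RHS]big_mkcond; apply: eq_bigr => k _.
      rewrite -mulmxA /T tiltembE combE // mul_mx_scalar tcoefS.
      by case: ifP => _; rewrite ?scale0r.
    rewrite (bigD1 i) //=; congr (_ + _); apply: eq_bigl => k.
    by rewrite ltn_neqAle andbC eq_sym.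
  have h1 : ai * nrm (w i) <= R + ai * \sum_(k < l | (i < k)%N) nrm (w k).
    have -> : ai * nrm (w i) =
        nrm (zi - \sum_(k < l | (i < k)%N) sqrtC (A i k) *: w k).
      by rewrite ziE addrK nrmZ ger0_norm // ltW.
    apply: le_trans (nrmB _ _) _; apply: lerD => //.
    apply: le_trans (nrm_sum _ _) _; rewrite mulr_sumr; apply: ler_sum => k ik.
    rewrite nrmZ ger0_norm ?sqrtC_ge0 ?tilt_ge0 //.
    apply: ler_wpM2r; first exact: nrm_ge0.
    rewrite ler_sqrtC ?nnegrE ?tilt_ge0 //.
    by apply: tilt_dom => //; apply: ltnW.
  rewrite -(ler_pM2l ai0) mulrDr mulrCA divff ?mulr1 //.
  by rewrite gt_eqF.
have Nb := N_bound (fun k => nrm_ge0 (w k)) hrec.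
set B := fun j : 'I_l => \sum_(k < l | (j <= k)%N) 2%:R ^+ (k - j)%N / sqrtC (A k k).
have B0 j : 0 <= B j.
  by apply: sumr_ge0 => k _; rewrite divr_ge0 ?exprn_ge0 ?ler0n ?sqrtC_ge0 ?ltW.
set K := \sum_(j < l) sqrtC (eps j) * B j.
have K0 : 0 <= K by apply: sumr_ge0 => j _; rewrite mulr_ge0 ?sqrtC_ge0.
have hpK : p <= R * K.
  apply: le_trans hp1 _; rewrite mulr_sumr; apply: ler_sum => j _.
  rewrite mulrCA; apply: ler_wpM2l; first by rewrite sqrtC_ge0.
  exact: Nb.
have bullet2 : p <= K ^+ 2.
  have [R00|Rn0] := eqVneq R 0.
    by rewrite pR R00 expr0n /= exprn_ge0.
  have Rgt0 : 0 < R by rewrite lt_def Rn0 R0.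
  have RK : R <= K by move: hpK; rewrite pR expr2 ler_pM2l.
  by rewrite pR !expr2 ler_pM.
split => // alpha a0 ha.
set g := fun j : 'I_l => (2 ^ (l - j))%N%:R : C.
have sa0 : 0 < sqrtC alpha by rewrite sqrtC_gt0.
have hB j : B j <= g j / sqrtC alpha.
  apply: (@le_trans _ _ ((\sum_(k < l | (j <= k)%N) 2%:R ^+ (k - j)%N) / sqrtC alpha)).
    rewrite mulr_suml; apply: ler_sum => k _; apply: ler_wpM2l.
      by rewrite exprn_ge0 ?ler0n.
    rewrite lef_pV2 ?posrE ?sqrtC_gt0 ?hdiag //.
    by rewrite ler_sqrtC ?nnegrE ?ha ?(ltW a0) ?(ltW (hdiag k)).
  apply: ler_wpM2r; first by rewrite invr_ge0 ltW.
  have -> : \sum_(k < l | (j <= k)%N) 2%:R ^+ (k - j)%N =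
      (\sum_(k < l | (j <= k)%N) 2 ^ (k - j))%N%:R :> C.
    by rewrite natr_sum; apply: eq_bigr => k _; rewrite natrX.
  by rewrite ler_nat; apply: ltnW (geo1 l j).
set S := \sum_j sqrtC (eps j) * g j.
have hK : K <= S / sqrtC alpha.
  rewrite /S mulr_suml; apply: ler_sum => j _; rewrite -mulrA.
  by apply: ler_wpM2l; [rewrite sqrtC_ge0 | apply: hB].
have hK2 : K ^+ 2 <= S ^+ 2 / alpha.
  rewrite expr2; apply: le_trans (ler_pM K0 K0 hK hK) _.
  by rewrite -expr2 exprMn exprVn sqrtCK.
have hS : S ^+ 2 <= (\sum_j eps j) * (\sum_j g j ^+ 2).
  have hx : forall j, 0 <= sqrtC (eps j) by move=> j; rewrite sqrtC_ge0.
  have := sumCS hx (fun j => ler0n C (2 ^ (l - j))%N).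
  rewrite -/S.
  have -> : \sum_j sqrtC (eps j) ^+ 2 = \sum_j eps j.
    by apply: eq_bigr => j _; rewrite sqrtCK.
  by [].
have hg : \sum_j g j ^+ 2 <= 2%:R ^+ (2 * l + 1)%N.
  have -> : \sum_j g j ^+ 2 = (\sum_(j < l) (2 ^ (l - j)) ^ 2)%N%:R :> C.
    by rewrite natr_sum; apply: eq_bigr => j _; rewrite /g -natrX.
  by rewrite -natrX ler_nat geo2.
have se0 : 0 <= \sum_j eps j by apply: sumr_ge0.
apply: le_trans bullet2 _; apply: le_trans hK2 _.
rewrite [X in _ <= X]mulrAC; apply: ler_wpM2r; first by rewrite invr_ge0 ltW.
apply: le_trans hS _; rewrite [X in X <= _]mulrC; exact: ler_wpM2r.
Qed.
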